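(* Assume $d'=1$, $t\ge2$, and $a<d$. Fix $n\ne j$ in $[t]$ and let $F_{n,j}$ be the $\binom{d+1}2\times d$ matrix with rows indexed by $\{k_1,k_2\}\in\operatorname{Mult}_2([d])$, columns by $k_3\in[d]$, and entries $(F_{n,j})_{\{k_1,k_2\},k_3}=y_{n,j}(\{k_1,k_2\},k_3)$. Then $\operatorname{rank}F_{n,j}(\mu(W))\le a$ for all $W$. Consequently all $\binom{\binom{d+1}{2}}{a+1}\binom{d}{a+1}$ minors of size $(a+1)\times(a+1)$ of $F_{n,j}$, homogeneous polynomials of degree $a+1$, vanish on the attention variety.
   Context: Setup: $Q,K\in\mathbb R^{a\times d}$, $V\in\mathbb R^{1\times d}$, $A=K^\top Q$ (so $\operatorname{rank}A\le a$), $\varphi_W(X)=VX(X^\top AX)$ for $X=(x_{kn})\in\mathbb R^{d\times t}$. For $\mathcal A\in\operatorname{Mult}_2([d])$ (size-2 multisets on $[d]$), $b\in[d]$, $n\ne j$: $c_{n,j}(\mathcal A,b)$ is the coefficient of $(\prod_{u\in\mathcal A}x_{un})x_{bj}$ in $\varphi_W(X)[1,j]$ and $y_{n,j}(\mathcal A,b)=c_{n,j}(\mathcal A,b)/|\operatorname{Perm}(\mathcal A)|$, $\operatorname{Perm}$ being the set of distinct orderings. $\mu$ maps $W=(Q,K,V)$ to all scaled coefficients (ambient coordinates with the same names); the attention variety is the Zariski closure of $\operatorname{im}\mu$. *)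

(* Defs.v *)
From HB Require Import structures.
From mathcomp Require Import all_boot all_order all_algebra.
From mathcomp Require Import mpoly.
Set Implicit Arguments.
Unset Strict Implicit.
Unset Printing Implicit Defensive.
Import Order.TTheory GRing.Theory Num.Theory.
Local Open Scope ring_scope.

(* Size-2 multisets {k1,k2} on [d], represented by ordered pairs k1 <= k2. *)
Definition mult2 (d : nat) := {p : 'I_d * 'I_d | (p.1 <= p.2)%N}.

Definition perm_mult2_set (d : nat) (A : mult2 d) : {set 'I_d * 'I_d} :=
  [set ((val A).1, (val A).2); ((val A).2, (val A).1)].

Definition attA (R : comRingType) (a d : nat) (Q K : 'M[R]_(a, d)) : 'M[R]_d :=
  K^T *m Q.

Definition Xvar (R : comRingType) (d t : nat) (k : 'I_d) (m : 'I_t)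
  : {mpoly R[d * t]} := 'X_(mxvec_index k m).
Definition Xmat (R : comRingType) (d t : nat) : 'M[{mpoly R[d * t]}]_(d, t) :=
  \matrix_(k, m) Xvar R k m.

Definition phiW (R : comRingType) (a d t : nat) (Q K : 'M[R]_(a, d))
  (V : 'M[R]_(1, d)) : 'M[{mpoly R[d * t]}]_(1, t) :=
  let X := Xmat R d t in
  (map_mx (fun c => c%:MP) V *m X) *m (X^T *m map_mx (fun c => c%:MP) (attA Q K) *m X).

Definition monoAb (d t : nat) (n j : 'I_t) (A : mult2 d) (b : 'I_d)
  : 'X_{1..d * t} :=
  (U_(mxvec_index (val A).1 n) + U_(mxvec_index (val A).2 n)
     + U_(mxvec_index b j))%MM.

Definition cnj (R : comRingType) (a d t : nat) (Q K : 'M[R]_(a, d))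
  (V : 'M[R]_(1, d)) (n j : 'I_t) (A : mult2 d) (b : 'I_d) : R :=
  (phiW t Q K V 0 j)@_(monoAb n j A b).

Definition ynj (R : fieldType) (a d t : nat) (Q K : 'M[R]_(a, d))
  (V : 'M[R]_(1, d)) (n j : 'I_t) (A : mult2 d) (b : 'I_d) : R :=
  cnj Q K V n j A b / (#|perm_mult2_set A|)%:R.

Definition coordT (d t : nat) :=
  {c : 'I_t * 'I_t * mult2 d * 'I_d | c.1.1.1 != c.1.1.2}.
Definition coord (d t : nat) (n j : 'I_t) (hnj : n != j) (A : mult2 d)
  (b : 'I_d) : coordT d t := exist _ (n, j, A, b) hnj.

Definition mu (R : fieldType) (a d t : nat) (Q K : 'M[R]_(a, d))
  (V : 'M[R]_(1, d)) : coordT d t -> R :=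
  fun c => ynj Q K V (val c).1.1.1 (val c).1.1.2 (val c).1.2 (val c).2.

Notation ambPoly R d t := {mpoly R[#|{: coordT d t}|]}.
Definition ambVar (R : comRingType) (d t : nat) (c : coordT d t)
  : ambPoly R d t := 'X_(enum_rank c).
Definition ambEval (R : comRingType) (d t : nat) (P : ambPoly R d t)
  (z : coordT d t -> R) : R := P.@[fun i => z (enum_val i)].

(* The attention variety: Zariski closure of the image of mu. *)
Definition attention_variety (R : fieldType) (a d t : nat)
  (z : coordT d t -> R) : Prop :=
  forall P : ambPoly R d t,
    (forall (Q K : 'M[R]_(a, d)) (V : 'M[R]_(1, d)), ambEval P (mu Q K V) = 0) ->
    ambEval P z = 0.

Definition Fnj (R : ringType) (d t : nat) (n j : 'I_t) (hnj : n != j)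
  (z : coordT d t -> R) : 'M[R]_(#|{: mult2 d}|, d) :=
  \matrix_(i, k) z (coord hnj (enum_val i) k).

Definition Fminor (R : comRingType) (d t a : nat) (n j : 'I_t) (hnj : n != j)
  (f : 'I_a.+1 -> 'I_#|{: mult2 d}|) (g : 'I_a.+1 -> 'I_d) : ambPoly R d t :=
  \det (\matrix_(r, s) ambVar R (coord hnj (enum_val (f r)) (g s))).

(* Main.v *)
Set Warnings "-all".
Require Import Defs.
From HB Require Import structures.
From mathcomp Require Import all_boot all_order all_algebra.
From mathcomp Require Import mpoly ring.
Import Order.TTheory GRing.Theory Num.Theory.
Local Open Scope ring_scope.

Definition mono3 {d t : nat} (m : 'I_t) (k p q : 'I_d) (j : 'I_t) : 'X_{1..d * t} :=
  (U_(mxvec_index k m) + U_(mxvec_index p m) + U_(mxvec_index q j))%MM.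

Lemma phiW_0j (R : comNzRingType) (a d t : nat) (Q K : 'M[R]_(a, d)) (V : 'M[R]_(1, d)) (j : 'I_t) : phiW t Q K V 0 j =
  \sum_(m < t) \sum_(k < d) \sum_(q < d) \sum_(p < d)
     (V 0 k * attA Q K p q)%:MP * 'X_[mono3 m k p q j].
Proof.
rewrite /phiW !mxE; apply: eq_bigr => m _.
rewrite !mxE mulr_suml; apply: eq_bigr => k _.
rewrite !mxE mulr_sumr; apply: eq_bigr => q _.
rewrite !mxE mulr_suml mulr_sumr; apply: eq_bigr => p _.
rewrite !mxE /mono3 !mpolyXD mpolyCM /Xvar.
ring.
Qed.
Lemma mxvec_index_inj m0 n0 (i i' : 'I_m0) (j j' : 'I_n0) :
  mxvec_index i j = mxvec_index i' j' -> i = i' /\ j = j'.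
Proof.
rewrite /mxvec_index => /cast_ord_inj /enum_rank_inj [-> ->]; by [].
Qed.

Lemma mono3_q (t d : nat) (n j m : 'I_t) (k p q : 'I_d) (A : mult2 d) (b : 'I_d) :
  n != j -> mono3 m k p q j = monoAb n j A b -> q = b.
Proof.
move=> hnj /(congr1 (fun mm : 'X_{1..d * t} => mm (mxvec_index q j))).
rewrite /mono3 /monoAb !mnmDE !mnm1E eqxx addn1.
have ne : forall u : 'I_d, (mxvec_index u n == mxvec_index q j) = false.
  move=> u; apply/negbTE/eqP => /mxvec_index_inj [_ e]; by rewrite e eqxx in hnj.
rewrite !ne /=.
case: (eqVneq (mxvec_index b j) (mxvec_index q j)) => [/mxvec_index_inj [-> _] //|_].
by rewrite addnC.
Qed.

Lemma cnjE (R : comNzRingType) (a d t : nat) (Q K : 'M[R]_(a, d)) (V : 'M[R]_(1, d))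
  (n j : 'I_t) (A : mult2 d) (b : 'I_d) :
  cnj Q K V n j A b = \sum_(m < t) \sum_(k < d) \sum_(q < d) \sum_(p < d)
     V 0 k * attA Q K p q * (mono3 m k p q j == monoAb n j A b)%:R.
Proof.
rewrite /cnj phiW_0j raddf_sum; apply: eq_bigr => m _.
rewrite raddf_sum; apply: eq_bigr => k _.
rewrite raddf_sum; apply: eq_bigr => q _.
rewrite raddf_sum; apply: eq_bigr => p _.
rewrite /= mcoeffCM mcoeffX.
by [].
Qed.

Lemma mono3_b (d t : nat) (n j m : 'I_t) (k p : 'I_d) (A : mult2 d) (b : 'I_d) :
  (mono3 m k p b j == monoAb n j A b) =
  ((U_(mxvec_index k m) + U_(mxvec_index p m))%MM ==
   (U_(mxvec_index (val A).1 n) + U_(mxvec_index (val A).2 n))%MM).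
Proof.
rewrite /mono3 /monoAb; apply/eqP/eqP => [/addIm //|-> //].
Qed.

Definition Mmat {R : fieldType} {d t : nat} (V : 'M[R]_(1, d)) (n : 'I_t)
  : 'M[R]_(#|{: mult2 d}|, d) :=
  \matrix_(r, p) ((\sum_(m < t) \sum_(k < d) V 0 k *
     ((U_(mxvec_index k m) + U_(mxvec_index p m))%MM ==
      (U_(mxvec_index (val (enum_val r)).1 n) + U_(mxvec_index (val (enum_val r)).2 n))%MM)%:R)
     / (#|perm_mult2_set (enum_val r)|)%:R).

Lemma Fnj_fact (R : fieldType) (a d t : nat) (Q K : 'M[R]_(a, d)) (V : 'M[R]_(1, d))
  (n j : 'I_t) (hnj : n != j) :
  Fnj hnj (mu Q K V) = Mmat V n *m attA Q K.
Proof.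
apply/matrixP => r b; rewrite !mxE /mu /= /ynj cnjE.
under [RHS]eq_bigr do rewrite mxE.
set T := monoAb n j (enum_val r) b.
set c := (#|perm_mult2_set (enum_val r)|)%:R.
have E : forall m k, \sum_(q < d) \sum_(p < d)
      V 0 k * attA Q K p q * (mono3 m k p q j == T)%:R =
   \sum_(p < d) V 0 k * attA Q K p b *
     ((U_(mxvec_index k m) + U_(mxvec_index p m))%MM ==
      (U_(mxvec_index (val (enum_val r)).1 n) + U_(mxvec_index (val (enum_val r)).2 n))%MM)%:R.
  move=> m k; rewrite (bigD1 b) //= [X in _ + X]big1 ?addr0.
    by apply: eq_bigr => p _; rewrite /T mono3_b.
  move=> q hq; apply: big1 => p _.
  case: eqP => [/(@mono3_q _ _ _ _ _ _ _ _ _ _ hnj) e|_]; last by rewrite mulr0.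
  by rewrite e eqxx in hq.
rewrite (eq_bigr _ (fun m _ => eq_bigr _ (fun k _ => E m k))).
under [RHS]eq_bigr do rewrite mulrAC.
rewrite -mulr_suml; congr (_ / _).
under [RHS]eq_bigr do rewrite mulr_suml.
rewrite [RHS]exchange_big; apply: eq_bigr => m _.
under [RHS]eq_bigr do rewrite mulr_suml.
rewrite [RHS]exchange_big; apply: eq_bigr => k _.
apply: eq_bigr => p _; ring.
Qed.

Lemma rank_part (R : fieldType) (a d t : nat) (Q K : 'M[R]_(a, d)) (V : 'M[R]_(1, d))
  (n j : 'I_t) (hnj : n != j) : (\rank (Fnj hnj (mu Q K V)) <= a)%N.
Proof.
rewrite Fnj_fact; apply: leq_trans (mxrankM_maxr _ _) _.
rewrite /attA; apply: leq_trans (mxrankM_maxr _ _) _.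
exact: rank_leq_row.
Qed.

Lemma prod_homog (R : comNzRingType) (N k : nat) (F : 'I_k -> {mpoly R[N]}) :
  (forall i, F i \in 1.-homog) -> \prod_(i < k) F i \in k.-homog.
Proof.
elim: k F => [|k IH] F hF; first by rewrite big_ord0 dhomog1.
rewrite big_ord_recr /= -[X in _ \in X.-homog]addn1; apply: dhomogM; last exact: hF.
by apply: IH => i; exact: hF.
Qed.

Lemma minor_homog (R : comNzRingType) (d t a : nat) (n j : 'I_t) (hnj : n != j)
  (f : 'I_a.+1 -> 'I_#|{: mult2 d}|) (g : 'I_a.+1 -> 'I_d) :
  Fminor R hnj f g \in (a.+1).-homog.
Proof.
rewrite /Fminor /determinant; apply: rpred_sum => s _.
case: (perm.odd_perm s); rewrite ?expr1 ?expr0 ?mul1r ?mulN1r ?rpredN;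
  apply: prod_homog => i; rewrite mxE /ambVar dhomogX /= mdeg1 //.

Qed.

Lemma det_rank0 (R : fieldType) (k : nat) (S : 'M[R]_k.+1) :
  (\rank S <= k)%N -> \det S = 0.
Proof.
move=> hr; apply/eqP; apply: contraLR hr => hd.
have hu : S \in unitmx by rewrite unitmxE unitfE.
by rewrite mxrank_unit // ltnn.
Qed.

Lemma rank_mxsub (R : fieldType) m1 n1 m2 n2 (f : 'I_m2 -> 'I_m1) (g : 'I_n2 -> 'I_n1)
  (A : 'M[R]_(m1, n1)) : (\rank (mxsub f g A) <= \rank A)%N.
Proof.
have -> : mxsub f g A = rowsub f (rowsub g A^T)^T.
  by apply/matrixP => i k; rewrite !mxE.
apply: leq_trans (mxrankS (rowsub_sub _ _)) _.
rewrite mxrank_tr; apply: leq_trans (mxrankS (rowsub_sub _ _)) _.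
by rewrite mxrank_tr.
Qed.

Lemma minor_vanish (R : fieldType) (a d t : nat) (n j : 'I_t) (hnj : n != j)
  (f : 'I_a.+1 -> 'I_#|{: mult2 d}|) (g : 'I_a.+1 -> 'I_d) (Q K : 'M[R]_(a, d)) (V : 'M[R]_(1, d)) :
  ambEval (Fminor R hnj f g) (mu Q K V) = 0.
Proof.
rewrite /ambEval /Fminor -det_map_mx.
apply: det_rank0.
have -> : map_mx (meval (fun i => mu Q K V (enum_val i)))
    (\matrix_(r, s) ambVar R (Defs.coord hnj (enum_val (f r)) (g s)))
   = mxsub f g (Fnj hnj (mu Q K V)).
  by apply/matrixP => r s; rewrite !mxE /ambVar mevalXU enum_rankK.

apply: (leq_trans (@rank_mxsub R _ _ _ _ f g (Fnj hnj (mu Q K V)))).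
exact: rank_part.
Qed.

Theorem mainTheorem10 (R : realFieldType) (a d t : nat)
  (ht : (2 <= t)%N) (had : (a < d)%N) (n j : 'I_t) (hnj : n != j) :
  (forall (Q K : 'M[R]_(a, d)) (V : 'M[R]_(1, d)),
      (\rank (Fnj hnj (mu Q K V)) <= a)%N) /\
  (forall (f : 'I_a.+1 -> 'I_#|{: mult2 d}|) (g : 'I_a.+1 -> 'I_d),
      Fminor R hnj f g \in (a.+1).-homog /\
      (forall z : coordT d t -> R,
          attention_variety a z -> ambEval (Fminor R hnj f g) z = 0)).
Proof.
split; first by move=> Q K V; exact: rank_part.
move=> f g; split; first exact: minor_homog.
move=> z hz; apply: hz => Q K V; exact: minor_vanish.
Qed.
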